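(* Let $\emptyset\neq\mathcal T\subset\binom{[n]}{3}$ be an intersecting family. Then either $\mathcal T$ is isomorphic to $\mathcal L$ or to $\mathcal T_0$, or there exist $T\in\mathcal T$ and $S\subset T$ with $|S|=2$ and $|\mathcal T(\overline S)|\leq 1$.
   Context: A family is intersecting if any two members intersect. For $S\subset[n]$, $\mathcal T(\overline S)=\{T\in\mathcal T: T\cap S=\emptyset\}$. $\mathcal L$ is the Fano plane: $\{1,2,3\},\{1,4,5\},\{1,6,7\},\{2,4,6\},\{2,5,7\},\{3,5,6\},\{3,4,7\}$. $\mathcal T_0\subset\binom{[6]}{3}$ is $\{\{1,2,3\},\{1,2,4\},\{3,4,5\},\{3,4,6\},\{1,5,6\},\{2,5,6\},\{1,3,5\},\{2,4,5\},\{1,4,6\},\{2,3,6\}\}$. Isomorphic means equal up to an injective relabeling of vertices. *)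

(* Defs.v *)
From mathcomp Require Import all_boot.
Set Implicit Arguments. Unset Strict Implicit. Unset Printing Implicit Defensive.

(* Vertices of [m] = {1,...,m} are represented by 'I_m = {0,...,m-1}:
   paper vertex i corresponds to ordinal i-1; tri m a b c is the triple
   {a,b,c} of [m+1]. *)
Definition tri (m a b c : nat) : {set 'I_m.+1} :=
  [set (inord a.-1 : 'I_m.+1); inord b.-1; inord c.-1].

Definition fano : {set {set 'I_7}} :=
  [set tri 6 1 2 3; tri 6 1 4 5; tri 6 1 6 7; tri 6 2 4 6;
       tri 6 2 5 7; tri 6 3 5 6; tri 6 3 4 7].

Definition T0 : {set {set 'I_6}} :=
  [set tri 5 1 2 3; tri 5 1 2 4; tri 5 3 4 5; tri 5 3 4 6; tri 5 1 5 6;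
       tri 5 2 5 6; tri 5 1 3 5; tri 5 2 4 5; tri 5 1 4 6; tri 5 2 3 6].

Definition intersecting (T : finType) (F : {set {set T}}) : Prop :=
  forall A B, A \in F -> B \in F -> A :&: B != set0.

Definition fam_image (T U : finType) (f : T -> U) (F : {set {set T}})
  : {set {set U}} := [set f @: (A : {set T}) | A in F].

Definition fam_iso (T U : finType) (F : {set {set U}}) (G : {set {set T}})
  : Prop := exists f : T -> U, injective f /\ F = fam_image f G.

(* T(\bar S) = members of F disjoint from S. *)
Definition avoid (T : finType) (F : {set {set T}}) (S : {set T})
  : {set {set T}} := [set A in F | [disjoint A & S]].

(* Main.v *)
Require Import Defs.
From mathcomp Require Import all_boot.
From Stdlib Require Import Classical.
Set Implicit Arguments. Unset Strict Implicit. Unset Printing Implicit Defensive.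

Section Basic.
Variable T : finType.
Implicit Types x y z w u v : T.

Lemma mem3P w x y z : reflect (w = x \/ w = y \/ w = z) (w \in [set x; y; z]).
Proof.
rewrite !inE -orbA; apply: (iffP or3P).
- by case=> /eqP ->; auto.
- by case=> [->|[->|->]]; rewrite eqxx; [apply: Or31|apply: Or32|apply: Or33].
Qed.

Lemma nmem3 w x y z : w \notin [set x; y; z] -> w <> x /\ w <> y /\ w <> z.
Proof. by move=> H; split; [|split] => E; apply: (negP H); apply/mem3P; auto. Qed.

Lemma card3D x y z : #|[set x; y; z]| = 3 -> x <> y /\ x <> z /\ y <> z.
Proof.
move=> H.
have L : forall a b : T, #|[set a; b]| <= 2 by move=> a b; rewrite cards2; case: (a != b).
split; [|split] => E; subst.
- have: [set y; y; z] \subset [set y; z] by apply/subsetP => w; rewrite !inE; case: (w == y).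
  by move/subset_leq_card; rewrite H => /leq_trans /(_ (L _ _)).
- have: [set z; y; z] \subset [set z; y] by apply/subsetP => w; rewrite !inE; case: (w == z); case: (w == y).
  by move/subset_leq_card; rewrite H => /leq_trans /(_ (L _ _)).
- have: [set x; z; z] \subset [set x; z] by apply/subsetP => w; rewrite !inE; case: (w == x); case: (w == z).
  by move/subset_leq_card; rewrite H => /leq_trans /(_ (L _ _)).
Qed.

Lemma dec3 (E : {set T}) x : #|E| = 3 -> x \in E -> exists u v, E = [set x; u; v].
Proof.
move=> H xE; have : #|E :\ x| == 2 by rewrite (cardsD1 x E) xE add1n in H; case: H => ->.
case/cards2P => u [v [_ Ed]]; exists u, v.
by apply/setP => w; rewrite -{1}(setD1K xE) Ed !inE orbA.
Qed.

Lemma set3_12 x y z : [set x; y; z] = [set y; x; z].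
Proof. by apply/setP => w; rewrite !inE; case: (w == x); case: (w == y). Qed.
Lemma set3_23 x y z : [set x; y; z] = [set x; z; y].
Proof. by apply/setP => w; rewrite !inE; case: (w == y); case: (w == z); case: (w == x). Qed.
Lemma set3_13 x y z : [set x; y; z] = [set z; y; x].
Proof. by apply/setP => w; rewrite !inE; case: (w == y); case: (w == z); case: (w == x). Qed.
End Basic.

Ltac triv_disj P := match P with
  | ?x = ?x => idtac
  | ?A \/ ?B => first [triv_disj A | triv_disj B] end.

Ltac simp := repeat match goal with
  | H : _ /\ _ |- _ => destruct H
  | H : ?x = ?x |- _ => clear H
  | H : ?x <> ?x |- _ => exfalso; exact (H erefl)
  | H : ?P |- _ => triv_disj P; clear H
  | H : ?x = ?y |- _ => first [subst x | subst y]
  end.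

Ltac crush_with tac := simp; lazymatch goal with
  | H : _ \/ _ |- _ => destruct H as [H|H]; crush_with tac
  | _ => tac end.

Ltac seteq := apply/eqP/setP => ?; rewrite !inE; by do ![case: (_ == _)].
Ltac killeq := repeat match goal with
 | H : _ /\ _ |- _ => destruct H
 | H : ?x <> ?y |- _ => rewrite ?(introF eqP H) ?(introF eqP (not_eq_sym H)); clear H end.

Section Fam.
Variable T : finType.
Variable F : {set {set T}}.
Hypothesis Hu : forall A, A \in F -> #|A| = 3.
Hypothesis Hi : intersecting F.
Hypothesis Hs : forall A S : {set T}, A \in F -> S \subset A -> #|S| = 2 -> 1 < #|avoid F S|.
Implicit Types x y z w u v : T.

Lemma dist x y z : [set x; y; z] \in F -> x <> y /\ x <> z /\ y <> z.
Proof. by move/Hu/card3D. Qed.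

Lemma meet9 x1 x2 x3 y1 y2 y3 : [set x1; x2; x3] \in F -> [set y1; y2; y3] \in F ->
  x1 = y1 \/ x1 = y2 \/ x1 = y3 \/ x2 = y1 \/ x2 = y2 \/ x2 = y3 \/
  x3 = y1 \/ x3 = y2 \/ x3 = y3.
Proof.
move=> H1 H2; have /set0Pn [w] := Hi H1 H2.
rewrite inE => /andP [/mem3P h1 /mem3P h2].
case: h1 => [E|[E|E]]; subst w; tauto.
Qed.

Lemma avoid2 E y z : E \in F -> y \in E -> z \in E -> y <> z ->
  exists X Y, [/\ X \in F, Y \in F, X <> Y & [/\ y \notin X, z \notin X, y \notin Y & z \notin Y]].
Proof.
move=> EF yE zE yz.
have S2 : #|[set y; z]| = 2 by rewrite cards2; case: eqP.
have SE : [set y; z] \subset E by apply/subsetP => w; rewrite !inE => /orP [] /eqP ->.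
have /card_gt1P [X [Y [XA YA XY]]] := Hs EF SE S2.
move: XA YA; rewrite !inE => /andP [XF dX] /andP [YF dY].
exists X, Y; split => //; first by move=> E'; subst; rewrite eqxx in XY.
have y2 : y \in [set y; z] by rewrite !inE eqxx.
have z2 : z \in [set y; z] by rewrite !inE eqxx orbT.
by rewrite !(disjointFl dX) ?(disjointFl dY).
Qed.

Lemma avoider E y z (B : {set T}) : E \in F -> y \in E -> z \in E -> y <> z ->
  exists X, [/\ X \in F, y \notin X, z \notin X & X <> B].
Proof.
move=> EF yE zE yz; have [X [Y [XF YF XY [h1 h2 h3 h4]]]] := avoid2 EF yE zE yz.
case: (classic (X = B)) => XB; last by exists X.
by exists Y; split => // YB; apply: XY; rewrite XB YB.
Qed.

Lemma through x y z (X : {set T}) : [set x; y; z] \in F -> X \in F -> y \notin X -> z \notin X ->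
  exists u v, X = [set x; u; v].
Proof.
move=> AF XF yX zX; apply: dec3; first exact: Hu.
have /set0Pn [w] := Hi XF AF; rewrite inE => /andP [wX /mem3P].
by case=> [E|[E|E]]; subst w => //; [rewrite wX in yX | rewrite wX in zX].
Qed.

Lemma wit x y z : [set x; y; z] \in F -> exists u1 v1 u2 v2,
  [/\ [set x; u1; v1] \in F, [set x; u2; v2] \in F,
      [/\ u1 <> y, u1 <> z, v1 <> y & v1 <> z],
      [/\ u2 <> y, u2 <> z, v2 <> y & v2 <> z] &
      ~ ((u1 = u2 /\ v1 = v2) \/ (u1 = v2 /\ v1 = u2)) /\
      [set x; u1; v1] <> [set x; u2; v2]].
Proof.
move=> AF; have [D1 [D2 D3]] := dist AF.
have yA : y \in [set x; y; z] by apply/mem3P; auto.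
have zA : z \in [set x; y; z] by apply/mem3P; auto.
have [X [Y [XF YF XY [h1 h2 h3 h4]]]] := avoid2 AF yA zA D3.
have [u1 [v1 Xe]] := through AF XF h1 h2.
have [u2 [v2 Ye]] := through AF YF h3 h4.
subst X Y; exists u1, v1, u2, v2; split => //.
- by move: (nmem3 h1) (nmem3 h2) => [? [? ?]] [? [? ?]]; split=> E; subst; auto.
- by move: (nmem3 h3) (nmem3 h4) => [? [? ?]] [? [? ?]]; split=> E; subst; auto.
- split => // - [[E1 E2]|[E1 E2]]; subst; apply: XY => //; exact: set3_23.
Qed.

End Fam.

Ltac perm3 := match goal with
 | |- is_true ([set ?x;?y;?z] == [set ?x;?y;?z]) => idtac
 | |- is_true ([set ?x;?y;?z] == [set ?x;?z;?y]) => idtac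
 | |- is_true ([set ?x;?y;?z] == [set ?y;?x;?z]) => idtac
 | |- is_true ([set ?x;?y;?z] == [set ?y;?z;?x]) => idtac
 | |- is_true ([set ?x;?y;?z] == [set ?z;?x;?y]) => idtac
 | |- is_true ([set ?x;?y;?z] == [set ?z;?y;?x]) => idtac
 end; seteq.
Ltac split_on u names := lazymatch names with
  | (?x, ?rest) => destruct (classic (u = x)); [subst u | split_on u rest]
  | tt => idtac end.
Ltac memb := first [ perm3 | apply/orP; first [right; perm3 | left; memb] ].

Section Fam.
Variable T : finType.
Variable F : {set {set T}}.
Hypothesis Hu : forall A, A \in F -> #|A| = 3.
Hypothesis Hi : intersecting F.
Implicit Types x y z w u v : T.

Lemma grab E x y z : E \in F -> [set x; y; z] \in F -> exists w u v,
  E = [set w; u; v] /\ (w = x \/ w = y \/ w = z).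
Proof.
move=> EF AF; have /set0Pn [w] := Hi EF AF; rewrite inE => /andP [wE /mem3P wA].
have [u [v Ee]] := dec3 (Hu EF) wE; by exists w, u, v.
Qed.

Lemma inj_nth (s : seq T) (x0 : T) k : size s = k -> uniq s ->
  injective (fun i : 'I_k => nth x0 s i).
Proof.
move=> Hk Hu' i j /eqP; rewrite nth_uniq ?Hk // => /eqP; exact: val_inj.
Qed.

Lemma fano_concl a b c p q r s :
  [set a; b; c] \in F -> [set a; p; q] \in F -> [set a; r; s] \in F ->
  [set b; p; r] \in F -> [set b; q; s] \in F -> [set c; q; r] \in F ->
  [set c; p; s] \in F -> fam_iso F fano.
Proof.
move=> H1 H2 H3 H4 H5 H6 H7.
move: (dist Hu H1) (dist Hu H2) (dist Hu H3) (dist Hu H4) (dist Hu H5) (dist Hu H6) (dist Hu H7) => D1 D2 D3 D4 D5 D6 D7.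
have FE : F = [set [set a; b; c]; [set a; p; q]; [set a; r; s]; [set b; p; r];
                   [set b; q; s]; [set c; q; r]; [set c; p; s]].
  apply/setP => E; apply/idP/idP; last first.
    by rewrite !inE => /orP [/orP [/orP [/orP [/orP [/orP []|]|]|]|]|] /eqP ->.
  move=> EF; have [w [u [v [Ee wA]]]] := grab EF H1; subst E.
  have D0 := dist Hu EF.
  move: (meet9 Hi EF H2) (meet9 Hi EF H3) (meet9 Hi EF H4) (meet9 Hi EF H5)
        (meet9 Hi EF H6) (meet9 Hi EF H7) => M2 M3 M4 M5 M6 M7.
  clear EF H1 H2 H3 H4 H5 H6 H7.
  rewrite !inE. (case: wA => [?|[?|?]]; subst w; split_on u (a,(b,(c,(p,(q,(r,(s,tt))))))); split_on v (a,(b,(c,(p,(q,(r,(s,tt))))))); crush_with ltac:(memb)).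
pose f := fun i : 'I_7 => nth a [:: a; b; c; p; q; r; s] i.
exists f; split.
  apply: inj_nth => //=; rewrite !inE; clear -D1 D2 D3 D4 D5 D6 D7; killeq; done.
rewrite FE /fam_image /fano.
rewrite !imsetU ?imsetU1 !imset_set1 /tri /= !imsetU ?imsetU1 !imset_set1 /f !inordK //=.
Qed.

Lemma T0_concl a b c p q r :
  [set a; b; c] \in F -> [set a; b; r] \in F -> [set c; r; q] \in F ->
  [set c; r; p] \in F -> [set a; q; p] \in F -> [set b; q; p] \in F ->
  [set a; c; q] \in F -> [set b; r; q] \in F -> [set a; r; p] \in F ->
  [set b; c; p] \in F -> fam_iso F T0.
Proof.
move=> H1 H2 H3 H4 H5 H6 H7 H8 H9 H10.
move: (dist Hu H1) (dist Hu H2) (dist Hu H3) (dist Hu H4) (dist Hu H5) (dist Hu H6) (dist Hu H7)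
  (dist Hu H8) (dist Hu H9) (dist Hu H10) => D1 D2 D3 D4 D5 D6 D7 D8 D9 D10.
have FE : F = [set [set a; b; c]; [set a; b; r]; [set c; r; q]; [set c; r; p]; [set a; q; p];
   [set b; q; p]; [set a; c; q]; [set b; r; q]; [set a; r; p]; [set b; c; p]].
  apply/setP => E; apply/idP/idP; last first.
    by rewrite !inE => H; repeat (case/orP: H => H); move/eqP: H => ->.
  move=> EF; have [w [u [v [Ee wA]]]] := grab EF H1; subst E.
  have D0 := dist Hu EF.
  move: (meet9 Hi EF H2) (meet9 Hi EF H3) (meet9 Hi EF H4) (meet9 Hi EF H5)
        (meet9 Hi EF H6) (meet9 Hi EF H7) (meet9 Hi EF H8) (meet9 Hi EF H9) (meet9 Hi EF H10)
   => M2 M3 M4 M5 M6 M7 M8 M9 M10.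
  clear EF H1 H2 H3 H4 H5 H6 H7 H8 H9 H10.
  rewrite !inE. Time (case: wA => [?|[?|?]]; subst w; split_on u (a,(b,(c,(p,(q,(r,tt)))))); split_on v (a,(b,(c,(p,(q,(r,tt)))))); crush_with ltac:(memb)).
pose f := fun i : 'I_6 => nth a [:: a; b; c; r; q; p] i.
exists f; split.
  apply: inj_nth => //=; rewrite !inE; clear -D1 D2 D3 D4 D5 D6 D7 D8 D9 D10; killeq; done.
rewrite FE /fam_image /T0 !imsetU ?imsetU1 !imset_set1 /tri /= !imsetU ?imsetU1 !imset_set1 /f !inordK //=.
Qed.
End Fam.

Ltac neqset := match goal with H : [set _; _; _] <> [set _; _; _] |- _ =>
  exfalso; apply: H; apply/eqP; perm3 end.

Section Fam.
Variable T : finType.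
Variable F : {set {set T}}.
Hypothesis Hu : forall A, A \in F -> #|A| = 3.
Hypothesis Hi : intersecting F.
Hypothesis Hs : forall A S : {set T}, A \in F -> S \subset A -> #|S| = 2 -> 1 < #|avoid F S|.
Implicit Types x y z w u v : T.

Lemma share_contra a b c p q r s x y :
  [set a; b; c] \in F -> [set a; p; q] \in F -> [set a; r; s] \in F ->
  [set b; x; y] \in F -> [set c; x; y] \in F ->
  p <> r -> p <> s -> q <> r -> q <> s ->
  b <> p -> b <> q -> b <> r -> b <> s -> c <> p -> c <> q -> c <> r -> c <> s -> False.
Proof.
move=> H1 H2 H3 H4 H5 pr ps qr qs bp bq br bs cp cq cr cs.
have [_ [_ xy]] := dist Hu H4.
have xE : x \in [set b; x; y] by apply/mem3P; auto.
have yE : y \in [set b; x; y] by apply/mem3P; auto.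
have [X [XF xX yX XA]] := avoider Hs [set a; b; c] H4 xE yE xy.
have [w [u [v [Xe wA]]]] := grab Hu Hi XF H4; subst X.
move: (nmem3 xX) (nmem3 yX) (dist Hu XF) (dist Hu H1) (dist Hu H2) (dist Hu H3) (dist Hu H4) (dist Hu H5)
  (meet9 Hi XF H1) (meet9 Hi XF H2) (meet9 Hi XF H3) (meet9 Hi XF H5).
clear -XA wA pr ps qr qs bp bq br bs cp cq cr cs => *.
crush_with ltac:(first [neqset | fail 100 "BAD"]).
Qed.

Lemma bform a b c p q r s u v :
  [set b; u; v] \in F -> [set a; p; q] \in F -> [set a; r; s] \in F ->
  u <> a -> u <> c -> v <> a -> v <> c -> b <> a -> b <> p -> b <> q -> b <> r -> b <> s ->
  p <> r -> p <> s -> q <> r -> q <> s ->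
  ((u = p \/ u = q) /\ (v = r \/ v = s)) \/ ((v = p \/ v = q) /\ (u = r \/ u = s)).
Proof.
move=> H1 H2 H3 *.
move: (dist Hu H1) (meet9 Hi H1 H2) (meet9 Hi H1 H3); clear H1 H2 H3 => *.
crush_with ltac:(intuition).
Qed.


Lemma bnorm a b c p q r s u v :
  [set b; u; v] \in F -> [set a; p; q] \in F -> [set a; r; s] \in F ->
  u <> a -> u <> c -> v <> a -> v <> c -> b <> a -> b <> p -> b <> q -> b <> r -> b <> s ->
  p <> r -> p <> s -> q <> r -> q <> s ->
  exists i j, [/\ [set b; i; j] \in F, i = p \/ i = q, j = r \/ j = s & [set b; u; v] = [set b; i; j]].
Proof.
move=> H1 H2 H3 n1 n2 n3 n4 n5 n6 n7 n8 n9 n10 n11 n12 n13.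
case: (bform H1 H2 H3 n1 n2 n3 n4 n5 n6 n7 n8 n9 n10 n11 n12 n13) => [[h1 h2]|[h1 h2]]; first by exists u, v.
by exists v, u; rewrite set3_23; split.
Qed.

Lemma case1 a b c p q r s :
  [set a; b; c] \in F -> [set a; p; q] \in F -> [set a; r; s] \in F ->
  b <> p -> b <> q -> b <> r -> b <> s -> c <> p -> c <> q -> c <> r -> c <> s ->
  p <> r -> p <> s -> q <> r -> q <> s -> fam_iso F fano.
Proof.
move=> H1 H2 H3 bp bq br bs cp cq cr cs pr ps qr qs.
have [ab [ac bc]] := dist Hu H1.
have [ap [aq pq]] := dist Hu H2.
have [ar [as_ rs]] := dist Hu H3.
have H1b : [set b; a; c] \in F by rewrite -set3_12.
have H1c : [set c; b; a] \in F by rewrite -set3_13.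
have [u1 [v1 [u2 [v2 [Hb1 Hb2 [? ? ? ?] [? ? ? ?] [_ Nb]]]]]] := wit Hu Hi Hs H1b.
have [u3 [v3 [u4 [v4 [Hc1 Hc2 [? ? ? ?] [? ? ? ?] [_ Nc]]]]]] := wit Hu Hi Hs H1c.
have [i1 [j1 [Hb1' o1 o2 e1]]] := bnorm (c := c) Hb1 H2 H3 ltac:(done) ltac:(done) ltac:(done) ltac:(done)
  (not_eq_sym ab) bp bq br bs pr ps qr qs.
have [i2 [j2 [Hb2' o3 o4 e2]]] := bnorm (c := c) Hb2 H2 H3 ltac:(done) ltac:(done) ltac:(done) ltac:(done)
  (not_eq_sym ab) bp bq br bs pr ps qr qs.
have [i3 [j3 [Hc1' o5 o6 e3]]] := bnorm (c := b) Hc1 H2 H3 ltac:(done) ltac:(done) ltac:(done) ltac:(done)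
  (not_eq_sym ac) cp cq cr cs pr ps qr qs.
have [i4 [j4 [Hc2' o7 o8 e4]]] := bnorm (c := b) Hc2 H2 H3 ltac:(done) ltac:(done) ltac:(done) ltac:(done)
  (not_eq_sym ac) cp cq cr cs pr ps qr qs.
rewrite e1 e2 in Nb; rewrite e3 e4 in Nc.
have H3' : [set a; s; r] \in F by rewrite -set3_23.
clear Hb1 Hb2 Hc1 Hc2 e1 e2 e3 e4.
have M1 := meet9 Hi Hb1' Hc1'. have M2 := meet9 Hi Hb1' Hc2'.
have M3 := meet9 Hi Hb2' Hc1'. have M4 := meet9 Hi Hb2' Hc2'.
case: o1 => ?; subst i1; case: o2 => ?; subst j1; case: o3 => ?; subst i2; case: o4 => ?; subst j2;
case: o5 => ?; subst i3; case: o6 => ?; subst j3; case: o7 => ?; subst i4; case: o8 => ?; subst j4;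
  crush_with ltac:(first [ exfalso; first [exact: (share_contra H1 H2 H3 Hb1' Hc1' pr ps qr qs bp bq br bs cp cq cr cs) | exact: (share_contra H1 H2 H3 Hb1' Hc2' pr ps qr qs bp bq br bs cp cq cr cs) | exact: (share_contra H1 H2 H3 Hb2' Hc1' pr ps qr qs bp bq br bs cp cq cr cs) | exact: (share_contra H1 H2 H3 Hb2' Hc2' pr ps qr qs bp bq br bs cp cq cr cs)] | first [exact: (fano_concl Hu Hi H1 H2 H3 Hb1' Hb2' Hc1' Hc2') | exact: (fano_concl Hu Hi H1 H2 H3 Hb1' Hb2' Hc2' Hc1') | exact: (fano_concl Hu Hi H1 H2 H3 Hb2' Hb1' Hc1' Hc2') | exact: (fano_concl Hu Hi H1 H2 H3 Hb2' Hb1' Hc2' Hc1') | exact: (fano_concl Hu Hi H1 H2 H3' Hb1' Hb2' Hc1' Hc2') | exact: (fano_concl Hu Hi H1 H2 H3' Hb1' Hb2' Hc2' Hc1') | exact: (fano_concl Hu Hi H1 H2 H3' Hb2' Hb1' Hc1' Hc2') | exact: (fano_concl Hu Hi H1 H2 H3' Hb2' Hb1' Hc2' Hc1')] ]).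
Qed.

End Fam.

Ltac memF := first [ assumption | rewrite set3_23; assumption
  | rewrite set3_12; first [assumption | rewrite set3_23; assumption]
  | rewrite set3_13; first [assumption | rewrite set3_23; assumption] ].

Ltac neq := solve [ assumption | let E := fresh in intro E; subst; tauto ].

Lemma trinorm (T : finType) (x u v p q r : T) : u <> v -> p <> q -> p <> r -> q <> r ->
  u = p \/ u = q \/ v = p \/ v = q -> u = p \/ u = r \/ v = p \/ v = r ->
  u = q \/ u = r \/ v = q \/ v = r ->
  exists i j, [set x; u; v] = [set x; i; j] /\ ((i = p /\ j = q) \/ (i = p /\ j = r) \/ (i = q /\ j = r)).
Proof.
move=> *; crush_with ltac:(first [ (exists p, q; split; [apply/eqP; perm3 | tauto])
  | (exists p, r; split; [apply/eqP; perm3 | tauto]) | (exists q, r; split; [apply/eqP; perm3 | tauto]) ]).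
Qed.

Section Fam.
Variable T : finType.
Variable F : {set {set T}}.
Hypothesis Hu : forall A, A \in F -> #|A| = 3.
Hypothesis Hi : intersecting F.
Hypothesis Hs : forall A S : {set T}, A \in F -> S \subset A -> #|S| = 2 -> 1 < #|avoid F S|.
Implicit Types x y z w u v : T.

Definition nd x y z := forall u1 v1 u2 v2, [set x; u1; v1] \in F -> [set x; u2; v2] \in F ->
  u1 <> y -> u1 <> z -> v1 <> y -> v1 <> z -> u2 <> y -> u2 <> z -> v2 <> y -> v2 <> z ->
  u1 = u2 \/ u1 = v2 \/ v1 = u2 \/ v1 = v2.

Lemma nd_sym x y z : nd x y z -> nd x z y.
Proof. by move=> H u1 v1 u2 v2 H1 H2 *; apply: (H u1 v1 u2 v2). Qed.

Lemma nd_or x y z u1 v1 u2 v2 : nd x y z -> [set x; u1; v1] \in F -> [set x; u2; v2] \in F ->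
  u2 <> y -> u2 <> z -> v2 <> y -> v2 <> z ->
  u1 = y \/ u1 = z \/ v1 = y \/ v1 = z \/ u1 = u2 \/ u1 = v2 \/ v1 = u2 \/ v1 = v2.
Proof.
move=> N H1 H2 *.
case: (classic (u1 = y)); first tauto. case: (classic (u1 = z)); first tauto.
case: (classic (v1 = y)); first tauto. case: (classic (v1 = z)); first tauto.
by move=> *; have := N u1 v1 u2 v2 H1 H2; tauto.
Qed.

Lemma outer_meet x u v y p q : [set x; u; v] \in F -> [set y; p; q] \in F ->
  x <> y -> x <> p -> x <> q -> u <> y -> v <> y -> u = p \/ u = q \/ v = p \/ v = q.
Proof.
move=> H1 H2 *; have := meet9 Hi H1 H2; crush_with ltac:(intuition).
Qed.


Lemma sideA a b c p q r :
  [set a; b; c] \in F -> [set a; p; q] \in F -> [set a; p; r] \in F -> [set b; q; r] \in F ->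
  q <> r -> b <> p -> b <> q -> b <> r -> c <> p -> c <> q -> c <> r ->
  nd a b c -> nd b a c ->
  ([set a; b; r] \in F /\ [set c; p; r] \in F /\ [set c; q; r] \in F) \/
  ([set a; c; r] \in F /\ [set b; p; r] \in F /\ [set b; q; r] \in F).
Proof.
move=> H1 H2 H3 H4 qr bp bq br cp cq cr Na Nb.
have [ab [ac bc]] := dist Hu H1.
have [ap [aq pq]] := dist Hu H2.
have [_ [ar pr]] := dist Hu H3.
have H1b : [set b; a; c] \in F by rewrite -set3_12.
have H1c : [set c; b; a] \in F by rewrite -set3_13.
have [u1 [v1 [u2 [v2 [Hb1 Hb2 [? ? ? ?] [? ? ? ?] [_ NB]]]]]] := wit Hu Hi Hs H1b.
have [u3 [v3 [u4 [v4 [Hc1 Hc2 [? ? ? ?] [? ? ? ?] [_ NC]]]]]] := wit Hu Hi Hs H1c.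
have nb : forall u v, [set b; u; v] \in F -> u <> a -> u <> c -> v <> a -> v <> c ->
   exists i j, [set b; u; v] = [set b; i; j] /\ ((i = p /\ j = q) \/ (i = p /\ j = r) \/ (i = q /\ j = r)).
  move=> u v Hb ua uc va vc; have [_ [_ uv]] := dist Hu Hb.
  apply: trinorm => //.
  - by apply: (outer_meet Hb H2); neq.
  - by apply: (outer_meet Hb H3); neq.
  - by apply: (Nb u v q r) => //; neq.
have nc : forall u v, [set c; u; v] \in F -> u <> a -> u <> b -> v <> a -> v <> b ->
   exists i j, [set c; u; v] = [set c; i; j] /\ ((i = p /\ j = q) \/ (i = p /\ j = r) \/ (i = q /\ j = r)).
  move=> u v Hc ua ub va vb; have [_ [_ uv]] := dist Hu Hc.
  apply: trinorm => //.
  - by apply: (outer_meet Hc H2); neq.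
  - by apply: (outer_meet Hc H3); neq.
  - by apply: (outer_meet Hc H4); neq.
have [i1 [j1 [e1 o1]]] := nb u1 v1 Hb1 ltac:(done) ltac:(done) ltac:(done) ltac:(done).
have [i2 [j2 [e2 o2]]] := nb u2 v2 Hb2 ltac:(done) ltac:(done) ltac:(done) ltac:(done).
have [i3 [j3 [e3 o3]]] := nc u3 v3 Hc1 ltac:(done) ltac:(done) ltac:(done) ltac:(done).
have [i4 [j4 [e4 o4]]] := nc u4 v4 Hc2 ltac:(done) ltac:(done) ltac:(done) ltac:(done).
rewrite e1 in Hb1 NB; rewrite e2 in Hb2 NB; rewrite e3 in Hc1 NC; rewrite e4 in Hc2 NC.
clear e1 e2 e3 e4 nb nc.
have pE : p \in [set a; p; q] by apply/mem3P; auto.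
have qE : q \in [set a; p; q] by apply/mem3P; auto.
have [X [XF pX qX XA]] := avoider Hs [set a; b; c] H2 pE qE pq.
have [w [u [v [Xe wA]]]] := grab Hu Hi XF H2; subst X.
have wa : w = a.
  by case: wA => [//|[E|E]]; subst; [move: pX | move: qX]; rewrite !inE eqxx.
subst w.
have ND := nd_or Na XF H2 (not_eq_sym bp) (not_eq_sym cp) (not_eq_sym bq) (not_eq_sym cq).
move: (nmem3 pX) (nmem3 qX) (dist Hu XF) (meet9 Hi XF Hb1) (meet9 Hi XF Hb2)
  (meet9 Hi XF Hc1) (meet9 Hi XF Hc2) => *.
clear pX qX pE qE Na Nb H1b H1c H3 H4.
clear dependent u1; clear dependent v1; clear dependent u2; clear dependent v2.
clear dependent u3; clear dependent v3; clear dependent u4; clear dependent v4.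
clear Hs Hi Hu.
Time (split_on u (b,(c,(p,(q,(r,tt))))); split_on v (b,(c,(p,(q,(r,tt))))); simp;

  case: o1 => [[? ?]|[[? ?]|[? ?]]]; subst i1 j1; case: o2 => [[? ?]|[[? ?]|[? ?]]]; subst i2 j2;
  simp; case: o3 => [[? ?]|[[? ?]|[? ?]]]; subst i3 j3; case: o4 => [[? ?]|[[? ?]|[? ?]]]; subst i4 j4; simp;
  crush_with ltac:(first [ left; split; [|split]; memF | right; split; [|split]; memF | neqset ])).
Qed.

End Fam.

Section Fam.
Variable T : finType.
Variable F : {set {set T}}.
Hypothesis Hu : forall A, A \in F -> #|A| = 3.
Hypothesis Hi : intersecting F.
Hypothesis Hs : forall A S : {set T}, A \in F -> S \subset A -> #|S| = 2 -> 1 < #|avoid F S|.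
Implicit Types x y z w u v : T.

Lemma finish a b c p q r :
  [set a; b; c] \in F -> [set a; p; q] \in F -> [set a; p; r] \in F -> [set b; q; r] \in F ->
  [set a; b; r] \in F -> [set c; p; r] \in F -> [set c; q; r] \in F -> [set a; c; q] \in F ->
  [set b; p; q] \in F -> fam_iso F T0.
Proof.
move=> H1 H2 H3 H4 H5 H6 H7 H8 H9.
have [_ [_ qr]] := dist Hu H4.
have qE : q \in [set b; q; r] by apply/mem3P; auto.
have rE : r \in [set b; q; r] by apply/mem3P; auto.
have [X [XF qX rX XA]] := avoider Hs [set a; b; c] H4 qE rE qr.
have [w [u [v [Xe wA]]]] := grab Hu Hi XF H4; subst X.
have wb : w = b.
  by case: wA => [//|[E|E]]; subst; [move: qX | move: rX]; rewrite !inE eqxx.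
subst w.
have H10 : [set b; c; p] \in F.
  move: (nmem3 qX) (nmem3 rX) (dist Hu XF) (dist Hu H1) (dist Hu H2) (dist Hu H3) (dist Hu H4)
   (dist Hu H5) (dist Hu H6) (dist Hu H7) (dist Hu H8) (dist Hu H9)
   (meet9 Hi XF H2) (meet9 Hi XF H3) (meet9 Hi XF H5) (meet9 Hi XF H6) (meet9 Hi XF H7) (meet9 Hi XF H8)
   (meet9 Hi XF H9) => *.
  clear qX rX qE rE.
  crush_with ltac:(first [memF | neqset]).
by apply: (T0_concl Hu Hi (a := a) (b := b) (c := c) (p := p) (q := q) (r := r)); memF.
Qed.

Lemma step3 a b c p q r :
  [set a; b; c] \in F -> [set a; p; q] \in F -> [set a; p; r] \in F -> [set b; q; r] \in F ->
  q <> r -> b <> p -> b <> q -> b <> r -> c <> p -> c <> q -> c <> r ->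
  nd F a b c -> nd F b a c -> fam_iso F T0.
Proof.
move=> H1 H2 H3 H4 qr bp bq br cp cq cr Na Nb.
have H4' : [set b; r; q] \in F by rewrite -set3_23.
have R1 := sideA Hu Hi Hs H1 H2 H3 H4 qr bp bq br cp cq cr Na Nb.
have R2 := sideA Hu Hi Hs H1 H3 H2 H4' (not_eq_sym qr) bp br bq cp cr cq Na Nb.
have [ab [ac bc]] := dist Hu H1.
have [ap [aq pq]] := dist Hu H2.
have [_ [ar pr]] := dist Hu H3.
case: R1 => [[G1 [G2 G3]]|[G1 [G2 G3]]]; case: R2 => [[K1 [K2 K3]]|[K1 [K2 K3]]].
- exfalso; move: (meet9 Hi G1 K2) => *; crush_with ltac:(idtac).
- exact: (finish H1 H2 H3 H4 G1 G2 G3 K1 K2).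
- apply: (finish (a := a) (b := b) (c := c) (p := p) (q := r) (r := q)); memF.
- exfalso; move: (meet9 Hi G1 K2) => *; crush_with ltac:(idtac).
Qed.

End Fam.

Section Fam.
Variable T : finType.
Variable F : {set {set T}}.
Hypothesis Hu : forall A, A \in F -> #|A| = 3.
Hypothesis Hi : intersecting F.
Hypothesis Hs : forall A S : {set T}, A \in F -> S \subset A -> #|S| = 2 -> 1 < #|avoid F S|.
Implicit Types x y z w u v : T.

Lemma in_e x u v p s : [set x; u; v] = [set x; p; s] -> s = x \/ s = u \/ s = v.
Proof. by move=> e; apply/mem3P; rewrite e; apply/mem3P; auto. Qed.

Lemma pform x p q r u v : [set x; u; v] \in F ->
  u = p \/ u = q \/ v = p \/ v = q -> u = p \/ u = r \/ v = p \/ v = r -> q <> r ->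
  (exists s, [set x; u; v] = [set x; p; s]) \/ [set x; u; v] = [set x; q; r].
Proof.
move=> H M1 M2 qr; have [_ [_ uv]] := dist Hu H.
case: (classic (u = p)) => [->|up]; first by left; exists v.
case: (classic (v = p)) => [->|vp]; first by left; exists u; rewrite set3_23.
right; case: M1 => [//|[E1|[//|E1]]]; case: M2 => [//|[E2|[//|E2]]]; subst => //.
exact: set3_23.
Qed.

Lemma allp_contra a b c p q s1 s2 t1 t2 :
  [set a; b; c] \in F -> [set a; p; q] \in F ->
  [set b; p; s1] \in F -> [set b; p; s2] \in F -> s1 <> s2 ->
  [set c; p; t1] \in F -> [set c; p; t2] \in F -> t1 <> t2 ->
  p <> b -> p <> c -> q <> b -> q <> c -> nd F a b c ->
  s1 <> a -> s2 <> a -> t1 <> a -> t2 <> a -> s1 <> c -> s2 <> c -> t1 <> b -> t2 <> b -> False.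
Proof.
move=> H1 H2 B1 B2 s12 C1 C2 t12 pb pc qb qc Na sa1 sa2 ta1 ta2 sc1 sc2 tb1 tb2.
have [_ [_ pq]] := dist Hu H2.
have pE : p \in [set a; p; q] by apply/mem3P; auto.
have qE : q \in [set a; p; q] by apply/mem3P; auto.
have [X [XF pX qX XA]] := avoider Hs [set a; b; c] H2 pE qE pq.
have [w [u [v [Xe wA]]]] := grab Hu Hi XF H2; subst X.
have wa : w = a.
  by case: wA => [//|[E|E]]; subst; [move: pX | move: qX]; rewrite !inE eqxx.
subst w.
have ND := nd_or Na XF H2 pb pc qb qc.
move: (nmem3 pX) (nmem3 qX) (dist Hu XF) (dist Hu H1) (dist Hu B1) (dist Hu B2) (dist Hu C1) (dist Hu C2)
  (meet9 Hi XF B1) (meet9 Hi XF B2) (meet9 Hi XF C1) (meet9 Hi XF C2) => *.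
clear pX qX pE qE Na.
crush_with ltac:(first [neqset | fail]).
Qed.


Lemma case2 a b c : [set a; b; c] \in F -> nd F a b c -> nd F b a c -> nd F c a b -> fam_iso F T0.
Proof.
move=> H1 Na Nb Nc.
have [ab [ac bc]] := dist Hu H1.
have [u1 [v1 [u2 [v2 [Ha1 Ha2 [? ? ? ?] [? ? ? ?] [NP _]]]]]] := wit Hu Hi Hs H1.
have ND := Na u1 v1 u2 v2 Ha1 Ha2 ltac:(done) ltac:(done) ltac:(done) ltac:(done)
   ltac:(done) ltac:(done) ltac:(done) ltac:(done).
have [p [q [r [H2 H3 qr [[pb pc] [[qb qc] [rb rc]]]]]]] : exists p q r,
  [/\ [set a; p; q] \in F, [set a; p; r] \in F, q <> r &
   (p <> b /\ p <> c) /\ (q <> b /\ q <> c) /\ (r <> b /\ r <> c)].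
  case: ND => [E|[E|[E|E]]].
  - rewrite -E in Ha2; exists u1, v1, v2; split => //; try (by move=> E'; apply: NP; left; split); repeat split; neq.
  - rewrite -E set3_23 in Ha2; exists u1, v1, u2; split => //; try (by move=> E'; apply: NP; right; split); repeat split; neq.
  - rewrite -E in Ha2; rewrite set3_23 in Ha1; exists v1, u1, v2; split => //; try (by move=> E'; apply: NP; right; split); repeat split; neq.
  - rewrite -E set3_23 in Ha2; rewrite set3_23 in Ha1; exists v1, u1, u2; split => //; try (by move=> E'; apply: NP; left; split); repeat split; neq.
clear dependent u1; clear dependent v1; clear dependent u2; clear dependent v2.
have [ap [aq pq]] := dist Hu H2.
have [_ [ar pr]] := dist Hu H3.
have H1b : [set b; a; c] \in F by rewrite -set3_12.
have H1c : [set c; b; a] \in F by rewrite -set3_13.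
have [u1 [v1 [u2 [v2 [Hb1 Hb2 [? ? ? ?] [? ? ? ?] [_ NB]]]]]] := wit Hu Hi Hs H1b.
have [u3 [v3 [u4 [v4 [Hc1 Hc2 [? ? ? ?] [? ? ? ?] [_ NC]]]]]] := wit Hu Hi Hs H1c.
have fb : forall u v, [set b; u; v] \in F -> u <> a -> v <> a ->
    (exists s, [set b; u; v] = [set b; p; s]) \/ [set b; u; v] = [set b; q; r].
  move=> u v Hb ua va; apply: pform => //.
  - by apply: (outer_meet Hi Hb H2); neq.
  - by apply: (outer_meet Hi Hb H3); neq.
have fc : forall u v, [set c; u; v] \in F -> u <> a -> v <> a ->
    (exists s, [set c; u; v] = [set c; p; s]) \/ [set c; u; v] = [set c; q; r].
  move=> u v Hc ua va; apply: pform => //.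
  - by apply: (outer_meet Hi Hc H2); neq.
  - by apply: (outer_meet Hi Hc H3); neq.
have S3b : [set b; q; r] \in F -> fam_iso F T0.
  move=> H4; apply: (step3 Hu Hi Hs H1 H2 H3 H4) => //; neq.
have S3c : [set c; q; r] \in F -> fam_iso F T0.
  move=> H4; have H1' : [set a; c; b] \in F by rewrite -set3_23.
  apply: (step3 Hu Hi Hs H1' H2 H3 H4) => //; try neq; exact: nd_sym.
case: (fb u1 v1 Hb1 ltac:(done) ltac:(done)) => [[s1 e1]|e1]; last by apply: S3b; rewrite -e1.
case: (fb u2 v2 Hb2 ltac:(done) ltac:(done)) => [[s2 e2]|e2]; last by apply: S3b; rewrite -e2.
case: (fc u3 v3 Hc1 ltac:(done) ltac:(done)) => [[t1 e3]|e3]; last by apply: S3c; rewrite -e3.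
case: (fc u4 v4 Hc2 ltac:(done) ltac:(done)) => [[t2 e4]|e4]; last by apply: S3c; rewrite -e4.
rewrite e1 in Hb1 NB; rewrite e2 in Hb2 NB; rewrite e3 in Hc1 NC; rewrite e4 in Hc2 NC.
have := in_e e1; have := in_e e2; have := in_e e3; have := in_e e4; move=> i4 i3 i2 i1.
have [_ [_ _]] := dist Hu Hb1.
exfalso; apply: (allp_contra H1 H2 Hb1 Hb2 _ Hc1 Hc2 _ pb pc qb qc Na).
all: try (by move=> E; subst).
all: have := dist Hu Hb1; have := dist Hu Hb2; have := dist Hu Hc1; have := dist Hu Hc2; move=> *; simp.
all: move=> E; subst; crush_with ltac:(fail).
Qed.

Lemma notnd_fano a b c : [set a; b; c] \in F -> ~ nd F a b c -> fam_iso F fano.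
Proof.
move=> H1 Hn; apply: NNPP => Hf; apply: Hn => u1 v1 u2 v2 Ha1 Ha2 *.
apply: NNPP => Hd; apply: Hf.
apply: (case1 Hu Hi Hs H1 Ha1 Ha2); try neq; move=> E; subst; tauto.
Qed.

Lemma main_gen : F != set0 -> fam_iso F fano \/ fam_iso F T0.
Proof.
case/set0Pn => A AF.
have /card_gt0P [x xA] : 0 < #|A| by rewrite Hu.
have [y [z Ae]] := dec3 (Hu AF) xA; subst A.
case: (classic (nd F x y z)) => Nx; last by left; apply: (notnd_fano AF).
have AF' : [set y; x; z] \in F by rewrite -set3_12.
case: (classic (nd F y x z)) => Ny; last by left; apply: (notnd_fano AF').
have AF'' : [set z; x; y] \in F by rewrite -set3_13 -set3_12.
case: (classic (nd F z x y)) => Nz; last by left; apply: (notnd_fano AF'').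
by right; apply: (case2 AF).
Qed.

End Fam.

Theorem lemma3p1 (n : nat) (F : {set {set 'I_n}}) :
  F != set0 ->
  (forall A, A \in F -> #|A| = 3) ->
  intersecting F ->
  fam_iso F fano \/ fam_iso F T0 \/
  exists A S : {set 'I_n}, [/\ A \in F, S \subset A, #|S| = 2 & #|avoid F S| <= 1].
Proof.
move=> Fne Hu Hi.
case: (classic (exists A S : {set 'I_n}, [/\ A \in F, S \subset A, #|S| = 2 & #|avoid F S| <= 1])) => [H|Hn].
  by right; right.
have Hs : forall A S : {set 'I_n}, A \in F -> S \subset A -> #|S| = 2 -> 1 < #|avoid F S|.
  move=> A S AF SA S2; rewrite ltnNge; apply/negP => H; apply: Hn; by exists A, S.
by case: (main_gen Hu Hi Hs Fne) => H; [left | right; left].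
Qed.
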